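(* Let $H$ be a real Hilbert space, $M\ge 1$, $I=\{1,\dots,M\}$, and let $f_i,h_i,T_i$ ($i\in I$) satisfy Assumption (A1)–(A4) below, with parameter sequences $\{\theta_n\},\{\lambda_n\},\{\beta_n\},\{\alpha_n\}$ satisfying Condition (C) below. Suppose that for each $i\in I$, $X_i\subset H$ is a bounded, closed and convex set with $S\subset X_i$, where $S=\bigcap_{i=1}^M \mathrm{Fix}\,T_i$. Consider the Distributed Accelerated Incremental Algorithm described below, modified in one of the following two ways: either the step defining $y^{(i)}_n$ is replaced by $$y^{(i)}_{n}=P_{X_{i}}\big(\mathrm{prox}_{\lambda_{n}f_{i}}(z^{(i)}_{n}+\lambda_{n}d^{(i)}_{n+1})\big),$$ or the step defining $w^{(i+1)}_n$ is replaced by $$w^{(i+1)}_{n}=P_{X_{i}}\big(\alpha_{n}u^{(i)}+(1-\alpha_{n})T_{i}(y^{(i)}_{n})\big),$$ where $P_{X_i}$ denotes the metric projection onto $X_i$. Then for each $i\in I$ the sequence $\{y^{(i)}_n\}$ generated by the resulting algorithm is bounded.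
   Context: Assumption (A1): each $f_i:H\to\mathbb{R}$ is continuous and convex. (A2): each $h_i:H\to\mathbb{R}$ is convex and Fréchet differentiable, and $\nabla h_i$ is $(1/L_i)$-Lipschitz continuous for some $L_i>0$. (A3): each $T_i:H\to H$ is firmly nonexpansive, i.e. $\|T_ix-T_iy\|^2\le\langle T_ix-T_iy,x-y\rangle$ for all $x,y$. (A4): $S=\bigcap_{i=1}^M\mathrm{Fix}\,T_i\neq\emptyset$ (where $\mathrm{Fix}\,T_i=\{y:T_iy=y\}$) and, with $\psi=\sum_{i=1}^M(f_i+h_i)$, the set $\Omega=\{\hat x\in S:\psi(\hat x)=\min_{x\in S}\psi(x)\}$ is nonempty. Condition (C): $\{\theta_n\},\{\lambda_n\},\{\beta_n\},\{\alpha_n\}$ are decreasing real sequences converging to $0$ with $\theta_n\in[0,1)$, $\lambda_n\in(0,2\min_{i\in I}L_i]$, $\beta_n\in(0,1]$, $\alpha_n\in(0,1]$, and: (C1) $\sum_n\alpha_n=\infty$; (C2) $\lim_n\frac{1}{\alpha_{n+1}}\big|\frac{1}{\lambda_{n+1}}-\frac{1}{\lambda_n}\big|=0$; (C3) $\lim_n\frac{1}{\lambda_{n+1}}\big|1-\frac{\alpha_n}{\alpha_{n+1}}\big|=0$; (C4) $\lim_n\frac{\alpha_n}{\lambda_n}=0$; (C5) $\lim_n\frac{\theta_n}{\alpha_{n+1}\lambda_{n+1}}=0$; (C6) $\frac{\lambda_n}{\lambda_{n+1}}\le\sigma$ for some $\sigma\ge1$ and all $n$; (C7) $\lim_n\frac{\beta_n}{\alpha_{n+1}}=0$.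 For proper lsc convex $g$ and $\lambda>0$, $\mathrm{prox}_{\lambda g}(x)=\arg\min_y\{g(y)+\frac{1}{2\lambda}\|x-y\|^2\}$. Distributed Accelerated Incremental Algorithm: choose $x_1\in H$, $w^{(i)}_0,z^{(i)}_0,u^{(i)}\in H$ and set $d^{(i)}_1=-\nabla h_i(z^{(i)}_0)$ ($i\in I$). For $n=1,2,\dots$: set $w^{(1)}_n=x_n$; for $i=1,\dots,M$ compute $z^{(i)}_n=w^{(i)}_n+\theta_n(w^{(i)}_n-w^{(i)}_{n-1})$, $d^{(i)}_{n+1}=-\nabla h_i(z^{(i)}_n)+\beta_nd^{(i)}_n$, $y^{(i)}_n=\mathrm{prox}_{\lambda_nf_i}(z^{(i)}_n+\lambda_nd^{(i)}_{n+1})$, $w^{(i+1)}_n=\alpha_nu^{(i)}+(1-\alpha_n)T_i(y^{(i)}_n)$; then set $x_{n+1}=w^{(M+1)}_n$. *)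

(* Defs.v *)
(* real Hilbert space modelled as a complete normed
   module over a realType together with an inner product inducing its norm. *)
From HB Require Import structures.
From mathcomp Require Import all_boot all_order all_algebra.
From mathcomp Require Import all_classical all_reals all_analysis.
Set Implicit Arguments. Unset Strict Implicit. Unset Printing Implicit Defensive.
Import Order.TTheory GRing.Theory Num.Theory.
Import numFieldNormedType.Exports.
Local Open Scope classical_set_scope.
Local Open Scope ring_scope.

Section Defs.
Context {R : realType} {V : normedModType R}.

Definition inner_product (ip : V -> V -> R) : Prop :=
  [/\ (forall x y, ip x y = ip y x),
      (forall x y z, ip (x + y) z = ip x z + ip y z),
      (forall (a : R) x y, ip (a *: x) y = a * ip x y) &
      (forall x, ip x x = `|x| ^+ 2)].

Definition frechet_gradient (ip : V -> V -> R) (h : V -> R) (g : V -> V) : Prop :=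
  forall x (e : R), 0 < e -> exists2 d : R, 0 < d &
    forall v, `|v| < d -> `|h (x + v) - h x - ip (g x) v| <= e * `|v|.

Definition lipschitz_with (K : R) (g : V -> V) : Prop :=
  forall x y, `|g x - g y| <= K * `|x - y|.

Definition firmly_nonexpansive (ip : V -> V -> R) (T : V -> V) : Prop :=
  forall x y, `|T x - T y| ^+ 2 <= ip (T x - T y) (x - y).

Definition Fix (T : V -> V) : set V := [set y | T y = y].

Definition is_prox (lam : R) (f : V -> R) (x p : V) : Prop :=
  forall y, f p + `|x - p| ^+ 2 / (2 * lam) <= f y + `|x - y| ^+ 2 / (2 * lam).

Definition is_metric_proj (X : set V) (x p : V) : Prop :=
  X p /\ forall y, X y -> `|x - p| <= `|x - y|.

Definition norm_bounded_set (X : set V) : Prop :=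
  exists B : R, forall x, X x -> `|x| <= B.

End Defs.

(* Main.v *)
Require Import Defs.
From HB Require Import structures.
From mathcomp Require Import all_boot all_order all_algebra.
From mathcomp Require Import all_classical all_reals all_analysis.
Import Order.TTheory GRing.Theory Num.Theory.
Import numFieldNormedType.Exports.
Local Open Scope classical_set_scope.
Local Open Scope ring_scope.
From mathcomp Require Import ring lra zify.


Local Open Scope convex_scope.
Lemma convex_lower (R : realType) (V : normedModType R) (f : V -> R) :
  continuous f -> convex_function setT f ->
  exists K : R, 0 <= K /\ forall p, f 0 - K - K * `|p| <= f p.
Proof.
move=> fc fcv.
have := fc 0 => /cvgrPdist_lt /(_ 1 ltr01) /nbhs_norm0P [e e0 He].
pose r := e / 2.
have r0 : 0 < r by rewrite divr_gt0.
have re : r < e by rewrite /r ltr_pdivrMr // ltr_pMr // ltr1n.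
have ri : 0 < r^-1 by rewrite invr_gt0.
exists (1 + r^-1); split; first lra.
move=> p.
have hloc : forall v : V, `|v| < e -> f 0 - 1 <= f v.
  move=> v /He /= h; have := ler_norm (f 0 - f v).
  move: h; idtac; lra.
have [pr|pr] := leP `|p| r.
  have := hloc p (le_lt_trans pr re).
  have : 0 <= r^-1 * `|p| by rewrite mulr_ge0 // invr_ge0 ltW.
  nra.
have p0 : 0 < `|p| by apply: lt_trans pr.
pose t := r / (`|p| + r).
have rp : 0 < `|p| + r by lra.
have t0 : 0 <= t by rewrite divr_ge0 // ltW.
have t1 : t <= 1 by rewrite ler_pdivrMr // mul1r; lra.
pose v : V := - (r / `|p|) *: p.
have nv : `|v| = r.
  by rewrite normrZ normrN ger0_norm ?divr_ge0 ?ltW // divfK // gt_eqF.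
have := fcv (Itv01 t0 t1) p v (in_setT _) (in_setT _).
rewrite [X in f X]/conv /= convRE /= /unstable.onem.
have -> : t *: p + (1 - t) *: v = 0.
  rewrite /v scalerA -scalerDl.
  suff -> : t + (1 - t) * - (r / `|p|) = 0 by rewrite scale0r.
  rewrite /t; field.
  by rewrite !gt_eqF.
have hv : f v <= f 0 + 1.
  have : `|f 0 - f v| < 1 by apply: He; rewrite /= nv.
  have := ler_norm (f v - f 0); rewrite distrC; lra.
have t1' : 0 <= 1 - t by lra.
move=> h.
have ht : 0 < t by rewrite divr_gt0.
have key : t * (f 0) <= t * f p + (1 - t).
  move: h hv; nra.
have : f 0 - (1 - t) / t <= f p.
  have hq : (1-t)/t * t = 1 - t by rewrite divfK // gt_eqF.
  rewrite -(ler_pM2l ht) mulrBr (mulrC t ((1-t)/t)) hq; lra.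
suff -> : (1 - t) / t = `|p| / r.
  have : 0 <= `|p| * (r^-1) by rewrite mulr_ge0 // ltW.
  move=> ?; rewrite /= mulrDl mul1r mulrC; lra.
rewrite /t; field.
by rewrite !gt_eqF.
Qed.
Lemma prox_bound (R : realType) (V : normedModType R) (f : V -> R) (K lam Lam A : R) (a p : V) :
  0 <= K -> (forall q, f 0 - K - K * `|q| <= f q) -> 0 < lam -> lam <= Lam ->
  `|a| <= A -> is_prox lam f a p -> `|p| <= 1 + 3 * A + 4 * Lam * K.
Proof.
move=> K0 hK l0 lL aA hp.
have := hp 0; rewrite subr0 => h.
have h2 : 2 * lam * f p + `|a - p| ^+ 2 <= 2 * lam * f 0 + `|a| ^+ 2.
  have l2 : 0 < 2 * lam by rewrite mulr_gt0.
  move: h; rewrite -(ler_pM2l l2) !mulrDr !(mulrC (2 * lam) (_ / _)) !divfK ?gt_eqF //.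
have hf := hK p.
have s0 := normr_ge0 p.
have al0 := normr_ge0 a.
have h3 : `|a - p| ^+ 2 <= `|a| ^+ 2 + 2 * lam * K * (1 + `|p|).
  have : 2 * lam * (f 0 - K - K * `|p|) <= 2 * lam * f p.
    by rewrite ler_pM2l ?mulr_gt0.
  move: h2; lra.
have [sA|sA] := leP `|p| `|a|.
  have : 0 <= Lam * K by rewrite mulr_ge0 //; lra.
  lra.
have h4 : (`|p| - `|a|) ^+ 2 <= `|a - p| ^+ 2.
  have hd : `|p| - `|a| <= `|a - p|.
    rewrite distrC; exact: le_trans (ler_norm _) (ler_dist_dist p a).
  rewrite !expr2; nra.
have h5 : `|p| ^+ 2 <= (2 * A + 2 * Lam * K) * `|p| + 2 * Lam * K.
  have e1 : lam * K * (1 + `|p|) <= Lam * K * (1 + `|p|).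
    by rewrite ler_pM2r ?mulr_gt0 //; nra.
  nra.
have LK : 0 <= Lam * K by rewrite mulr_ge0 //; lra.
nra.
Qed.
Lemma le_sum_term (R : realType) (r : nat -> R) n m :
  (forall k, 0 <= r k) -> (n < m)%N -> r n <= \sum_(k < m) r k.
Proof.
move=> r0; elim: m => // m IH; rewrite ltnS leq_eqVlt => /orP [/eqP ->|lt].
  rewrite big_ord_recr /= lerDr; exact: sumr_ge0.
rewrite big_ord_recr /=; apply: le_trans (IH lt) _; rewrite lerDl //.
Qed.

Lemma rec_bound (R : realType) (r b : nat -> R) (G : R) :
  (forall n, (1 <= n)%N -> r n.+1 <= G + `|b n| * r n) -> (forall n, 0 <= r n) ->
  b @ \oo --> 0 -> exists D, forall n, r n <= D.
Proof.
move=> hr r0 /cvgrPdist_lt /(_ (1/2)) [].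
  by rewrite divr_gt0.
move=> N _ HN.
pose S := \sum_(k < N.+2) r k.
have S0 : 0 <= S by exact: sumr_ge0.
exists (S + 2 * `|G|).
elim=> [|n IH].
  have := @le_sum_term R r 0 N.+2 r0 isT; rewrite -/S.
  have := normr_ge0 G; lra.
have [nN|nN] := leqP n.+1 N.+1.
  have := @le_sum_term R r n.+1 N.+2 r0 nN; rewrite -/S.
  have := normr_ge0 G; lra.
have hb : `|b n| < 1/2.
  have := HN n; rewrite /= sub0r normrN; apply; rewrite /=; lia.
have := hr n ltac:(lia).
have := ler_norm G.
have := r0 n; have := normr_ge0 (b n).
move: IH hb; nra.
Qed.

Local Close Scope convex_scope.

Theorem lemma1
  (R : realType) (H : completeNormedModType R) (ip : H -> H -> R)
  (M : nat)
  (f h : nat -> H -> R) (gradh : nat -> H -> H) (L : nat -> R)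
  (T : nat -> H -> H) (X : nat -> set H)
  (theta lambda beta alpha : nat -> R) (sigma : R)
  (x : nat -> H) (w z d y : nat -> nat -> H) (u : nat -> H)
  (modif : bool) :
  inner_product ip ->
  (1 <= M)%N ->
  (* (A1) *)
  (forall i, (1 <= i <= M)%N -> continuous (f i) /\ convex_function setT (f i)) ->
  (* (A2) *)
  (forall i, (1 <= i <= M)%N ->
     [/\ convex_function setT (h i), frechet_gradient ip (h i) (gradh i),
         0 < L i & lipschitz_with (L i)^-1 (gradh i)]) ->
  (* (A3) *)
  (forall i, (1 <= i <= M)%N -> firmly_nonexpansive ip (T i)) ->
  (* (A4) *)
  let S := [set p | forall i, (1 <= i <= M)%N -> Fix (T i) p] in
  let psi := fun p => \sum_(1 <= i < M.+1) (f i p + h i p) in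
  (exists2 p0, S p0 & forall q, S q -> psi p0 <= psi q) ->
  (* Condition (C) *)
  (forall n, (1 <= n)%N ->
     [/\ theta n.+1 <= theta n, lambda n.+1 <= lambda n,
         beta n.+1 <= beta n & alpha n.+1 <= alpha n]) ->
  theta @ \oo --> 0 -> lambda @ \oo --> 0 -> beta @ \oo --> 0 -> alpha @ \oo --> 0 ->
  (forall n, (1 <= n)%N ->
     [/\ 0 <= theta n < 1,
         0 < lambda n /\ (forall i, (1 <= i <= M)%N -> lambda n <= 2 * L i),
         0 < beta n <= 1 & 0 < alpha n <= 1]) ->
  (* (C1) *)
  (fun n => \sum_(1 <= k < n.+1) alpha k) @ \oo --> +oo ->
  (* (C2) *)
  (fun n => (alpha n.+1)^-1 * `|(lambda n.+1)^-1 - (lambda n)^-1|) @ \oo --> 0 ->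
  (* (C3) *)
  (fun n => (lambda n.+1)^-1 * `|1 - alpha n / alpha n.+1|) @ \oo --> 0 ->
  (* (C4) *)
  (fun n => alpha n / lambda n) @ \oo --> 0 ->
  (* (C5) *)
  (fun n => theta n / (alpha n.+1 * lambda n.+1)) @ \oo --> 0 ->
  (* (C6) *)
  1 <= sigma -> (forall n, (1 <= n)%N -> lambda n / lambda n.+1 <= sigma) ->
  (* (C7) *)
  (fun n => beta n / alpha n.+1) @ \oo --> 0 ->
  (* the sets X_i *)
  (forall i, (1 <= i <= M)%N ->
     [/\ norm_bounded_set (X i), closed (X i), convex_set (X i) & S `<=` X i]) ->
  (* the (modified) Distributed Accelerated Incremental Algorithm *)
  (forall i, (1 <= i <= M)%N -> d 1%N i = - gradh i (z 0%N i)) ->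
  (forall n, (1 <= n)%N -> w n 1%N = x n) ->
  (forall n i, (1 <= n)%N -> (1 <= i <= M)%N ->
     [/\ z n i = w n i + theta n *: (w n i - w n.-1 i),
         d n.+1 i = - gradh i (z n i) + beta n *: d n i &
         if modif then
           (exists2 p, is_prox (lambda n) (f i) (z n i + lambda n *: d n.+1 i) p
                     & is_metric_proj (X i) p (y n i)) /\
           w n i.+1 = alpha n *: u i + (1 - alpha n) *: T i (y n i)
         else
           is_prox (lambda n) (f i) (z n i + lambda n *: d n.+1 i) (y n i) /\
           is_metric_proj (X i) (alpha n *: u i + (1 - alpha n) *: T i (y n i))
                          (w n i.+1)]) ->
  (forall n, (1 <= n)%N -> x n.+1 = w n M.+1) ->
  forall i, (1 <= i <= M)%N ->
    exists B : R, forall n, (1 <= n)%N -> `|y n i| <= B.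

Proof.
move=> hip M1 hA1 hA2 hA3 S psi hA4 hmono cth clam cbeta calpha hpar hC1 hC2 hC3 hC4 hC5
  sig1 hC6 hC7 hX hd1 hw1 halg hx i hi.
case: modif halg => halg.
  have [[B HB] _ _ _] := hX i hi.
  exists B => n n1.
  have [_ _ [[p _ [Xy _]] _]] := halg n i n1 hi.
  exact: HB.
have hwX : forall n j, (1 <= n)%N -> (1 <= j <= M)%N -> X j (w n j.+1).
  move=> n j n1 hj; have [_ _ [_ [Xw _]]] := halg n j n1 hj; exact: Xw.
have hM : (1 <= M <= M)%N by rewrite M1 leqnn.
have [W HW] : exists W, forall n, `|w n i| <= W.
  have [[BM HBM] _ _ _] := hX M hM.
  case: i hi => [//|j] hj.
  case: j hj => [|j] hj.
    exists (`|w 0%N 1%N| + `|x 1%N| + `|BM|) => n.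
    have h1 := normr_ge0 (w 0%N 1%N); have h2 := normr_ge0 (x 1%N);
    have h3 := normr_ge0 BM; have h4 := ler_norm BM.
    case: n => [|[|n]]; first lra.
      rewrite hw1 //; lra.
    rewrite hw1 // hx // .
    have := HBM _ (hwX n.+1 M isT hM); lra.
  have hj' : (1 <= j.+1 <= M)%N by move: hj; lia.
  have [[Bj HBj] _ _ _] := hX j.+1 hj'.
  exists (`|w 0%N j.+2| + `|Bj|) => n.
  have h1 := normr_ge0 (w 0%N j.+2); have h4 := ler_norm Bj.
  case: n => [|n]; first (have := normr_ge0 Bj; lra).
  have := HBj _ (hwX n.+1 j.+1 isT hj'); lra.
have W0 : 0 <= W by apply: le_trans (HW 0%N).
have hz : forall n, (1 <= n)%N -> `|z n i| <= 3 * W.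
  move=> n n1; have [-> _ _] := halg n i n1 hi.
  have [/andP [th0 th1] _ _ _] := hpar n n1.
  apply: le_trans (ler_normD _ _) _.
  rewrite normrZ ger0_norm //.
  have := ler_normB (w n i) (w n.-1 i).
  have := HW n; have := HW n.-1.
  have : 0 <= `|w n i - w n.-1 i| by [].
  nra.
have [_ _ Li0 hlip] := hA2 i hi.
pose G := `|gradh i 0| + (L i)^-1 * (3 * W).
have hg : forall n, (1 <= n)%N -> `|gradh i (z n i)| <= G.
  move=> n n1.
  have e1 : `|gradh i (z n i)| <= `|gradh i 0| + `|gradh i (z n i) - gradh i 0|.
    by rewrite -{1}(subrK (gradh i 0) (gradh i (z n i))) addrC ler_normD.
  have e2 := hlip (z n i) 0; rewrite subr0 in e2.
  have e3 : (L i)^-1 * `|z n i| <= (L i)^-1 * (3 * W).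
    by rewrite ler_pM2l ?invr_gt0 //; exact: hz.
  rewrite /G; lra.
have [D HD] : exists D, forall n, `|d n i| <= D.
  apply: (@rec_bound R (fun n => `|d n i|) beta G) => //.
  move=> n n1 /=; have [_ -> _] := halg n i n1 hi.
  apply: le_trans (ler_normD _ _) _; rewrite normrN normrZ.
  have := hg n n1; lra.
have D0 : 0 <= D by apply: le_trans (HD 0%N).
have hlam : forall n, (1 <= n)%N -> lambda n <= lambda 1%N.
  elim=> [//|n IH] n1.
  case: n IH n1 => [|n] IH n1; first by [].
  have [_ hl _ _] := hmono n.+1 isT.
  apply: le_trans hl _; exact: IH.
have [K [K0 HK]] := @convex_lower R H (f i) (proj1 (hA1 i hi)) (proj2 (hA1 i hi)).
pose A := 3 * W + lambda 1%N * D.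
exists (1 + 3 * A + 4 * lambda 1%N * K) => n n1.
have [_ _ [hprox _]] := halg n i n1 hi.
have [_ [l0 _] _ _] := hpar n n1.
apply: (@prox_bound R H (f i) K (lambda n) (lambda 1%N) A _ _ K0 HK l0 (hlam n n1) _ hprox).
have := ler_normD (z n i) (lambda n *: d n.+1 i).
rewrite normrZ (ger0_norm (ltW l0)).
have := hz n n1.
have : lambda n * `|d n.+1 i| <= lambda 1%N * D.
  apply: ler_pM => //; [exact: ltW | exact: hlam].
rewrite /A; lra.
Qed.
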